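(* Let $n,t,k$ be integers with $n\geq 2t\geq 2$ and $k\geq 2$. Then \[C_k(n,t)\leq k^t A_k(n-2t,0^t),\] where $0^t$ denotes the word consisting of $t$ zeros.
   Context: Words are over $\Sigma_k=\{0,1,\ldots,k-1\}$. A border of a word $w$ is a non-empty word that is both a proper prefix and a proper suffix of $w$. A word $w$ is closed by a word $u$ if $u$ is a border of $w$ and $u$ occurs exactly twice in $w$ as a factor (overlapping occurrences counted). $C_k(n,t)$ denotes the number of words of length $n$ over $\Sigma_k$ that are closed by some word of length $t$. $A_k(m,v)$ denotes the number of words of length $m$ over $\Sigma_k$ that do not contain $v$ as a factor (for $m=0$ the empty word is counted). *)

(* Defs.v *)
From mathcomp Require Import all_boot.
Set Implicit Arguments. Unset Strict Implicit. Unset Printing Implicit Defensive.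

(* Words over Sigma_k = {0,...,k-1}: a word of length n is an n.-tuple of 'I_k;
   combinatorial predicates are stated on the underlying letter sequence
   (map val w : seq nat). *)

Definition occ (u w : seq nat) : nat :=
  count (fun i => take (size u) (drop i w) == u) (iota 0 (size w - size u).+1).

Definition is_border (u w : seq nat) : bool :=
  [&& 0 < size u, size u < size w,
      take (size u) w == u & drop (size w - size u) w == u].

Definition closed_by (u w : seq nat) : bool := is_border u w && (occ u w == 2).

(* C_k(n,t): words of length n over Sigma_k closed by some word of length t
   (the closing word is necessarily over Sigma_k, being a factor of w) *)
Definition Ck (k n t : nat) : nat :=
  #|[set w : n.-tuple 'I_k |
      [exists u : t.-tuple 'I_k, closed_by (map val u) (map val w)]]|.

Definition Ak (k m : nat) (v : seq nat) : nat :=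
  #|[set w : m.-tuple 'I_k | occ v (map val w) == 0]|.

(* Main.v *)
Require Import Defs.
From mathcomp Require Import all_boot.

Lemma occ_infix (v w : seq nat) : (0 < occ v w) = infix v w.
Proof.
rewrite /occ -has_count; apply/hasP/idP.
  case=> i _ /eqP Hi; apply/infixP.
  exists (take i w), (drop (size v) (drop i w)).
  by rewrite -{1}Hi !cat_take_drop.
case/infixP=> [s [s' ->]]; exists (size s).
  rewrite mem_iota /= add0n ltnS !size_cat.
  by rewrite addnA addnAC addnK leq_addr.
by rewrite drop_size_cat // take_size_cat.
Qed.

Lemma noprefix (t r b : nat) (s : seq nat) :
  r < t -> b != 0 -> prefix (nseq t 0) (nseq r 0 ++ b :: s) = false.
Proof.
move=> + bn0; elim: r t => [|r IH] [|t] //=.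
  by rewrite eq_sym (negbTE bn0).
rewrite ltnS => /IH; rewrite -/(nseq r 0 ++ b :: s) => ->.
by [].
Qed.

Lemma zrun (t r b : nat) (s : seq nat) :
  infix (nseq t 0) (nseq r 0 ++ b :: s) -> b != 0 -> r < t ->
  infix (nseq t 0) s.
Proof.
move=> + bn0; elim: r => [|r IH].
  rewrite cat0s infix_consl => /orP[H lt|//].
  by move: (@noprefix t 0 b s lt bn0); rewrite cat0s H.
rewrite (_ : nseq r.+1 0 ++ b :: s = 0 :: (nseq r 0 ++ b :: s)) //.
rewrite infix_consl => /orP[H lt|H lt].
  by move: (@noprefix t r.+1 b s lt bn0); rewrite H.
exact: IH H (ltnW lt).
Qed.
Section Sw.
Variable k' : nat.
Local Notation T := ('I_k'.+1).

Definition sw (c a : T) : T :=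
  if a == c then ord0 else if a == ord0 then c else a.

Lemma sw_eq0 c a : (sw c a == ord0) = (a == c).
Proof.
rewrite /sw; case: (eqVneq a c) => [_|nac]; first by rewrite eqxx.
case: (eqVneq a ord0) => [a0|an0]; [by rewrite -a0 eq_sym (negbTE nac) | exact: negbTE].
Qed.

Lemma swK c : involutive (sw c).
Proof.
move=> a; rewrite /sw.
case: (eqVneq a c) => [ac|nac].
  rewrite eqxx; case: (eqVneq ord0 c) => [->|]; by rewrite ac.
case: (eqVneq a ord0) => [a0|an0]; first by rewrite eqxx a0.
by rewrite (negbTE nac) (negbTE an0).
Qed.

Lemma sw_inj c : injective (sw c).
Proof. exact: inv_inj (swK c). Qed.

Fixpoint F (u : seq T) (r : nat) (x : seq T) : seq T :=
  match x with
  | [::] => [::]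
  | a :: x' => sw (nth ord0 u r) a ::
                 F u (if a == nth ord0 u r then r.+1 else 0) x'
  end.

Lemma size_F u r x : size (F u r x) = size x.
Proof. by elim: x r => //= a x IH r; rewrite IH. Qed.

Lemma F_inj u r x1 x2 : F u r x1 = F u r x2 -> x1 = x2.
Proof.
elim: x1 r x2 => [|a x1 IH] r [|b x2] //= [/sw_inj eab]; subst b.
by move/IH ->.
Qed.

Lemma key (t : nat) (u : seq T) : size u = t -> forall x r, r <= t ->
  infix (nseq t 0) (nseq r 0 ++ map val (F u r x)) ->
  infix (map val u) (map val (take r u ++ x)).
Proof.
move=> su; elim=> [|a x IH] r rt.
  rewrite /= cats0 => /size_infix; rewrite size_nseq cats0 => tr.
  rewrite size_nseq in tr.
  have -> : r = size u by apply/eqP; rewrite eqn_leq su rt.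
  by rewrite take_size infix_refl.
case: (ltngtP r t) => [lt||eq]; last first.
  by move=> _; rewrite eq -su take_size map_cat prefix_infix.

  by rewrite ltnNge rt.
rewrite [F _ _ _]/=.
case: (eqVneq a (nth ord0 u r)) => [ea|nea].
  rewrite (_ : nseq r 0 ++ map val (sw (nth ord0 u r) a :: F u r.+1 x)
     = nseq r.+1 0 ++ map val (F u r.+1 x)); last first.
    have /eqP -> : sw (nth ord0 u r) a == ord0 by rewrite sw_eq0 ea.
    rewrite map_cons; move: (map _ (F _ _ _)) => M /=.
    by elim: (r) => //= r' ->.
  move/(IH r.+1 lt).
  by rewrite (take_nth ord0) ?su // cat_rcons -ea.
move=> H.
have H2 : infix (nseq t 0) (map val (F u 0 x)).
  apply: (@zrun t r (val (sw (nth ord0 u r) a)) _ H _ lt).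
  by apply/negP=> /eqP v0; move: nea; rewrite -sw_eq0 -(inj_eq val_inj) v0.
move: (IH 0 (leq0n _) H2); rewrite take0 cat0s => H3.
by rewrite -cat1s catA map_cat; apply: infix_catl.
Qed.
End Sw.
Arguments F {k'} u r x.
Arguments key {k' t u}.
Arguments size_F {k'} u r x.
From mathcomp Require Import zify.

Lemma occ3 (U p s : seq nat) : 0 < size U ->
  3 <= occ U (U ++ (p ++ U ++ s) ++ U).
Proof.
move=> tpos.
set X := p ++ U ++ s.
set W := U ++ X ++ U.
set P := (fun i => take (size U) (drop i W) == U).
set l := [:: 0; size U + size p; size U + size X].
have sX : size X = size p + size U + size s by rewrite /X !size_cat addnA.
have sW : size W - size U = size U + size X.
  by rewrite /W !size_cat addnA addnK.
have ul : uniq l.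
  rewrite /l /= !inE !negb_or.
  rewrite !(eq_sym 0) -!lt0n eqn_add2l sX andbT; apply/andP; split.
    by apply/andP; split; rewrite addn_gt0 tpos.
  by rewrite -addnA -{1}[size p]addn0 eqn_add2l eq_sym -lt0n addn_gt0 tpos.
have sub : {subset l <= filter P (iota 0 (size W - size U).+1)}.
  move=> i; rewrite /l !inE => /or3P[] /eqP ->; rewrite mem_filter mem_iota
     /= add0n ltnS sW ?leq0n ?leqnn ?leq_add2l /P.
  - by rewrite drop0 /W take_size_cat // eqxx.
  - rewrite sX -addnA leq_addr andbT /W /X catA -!catA (catA U p) drop_size_cat;
      last by rewrite size_cat.
    by rewrite take_size_cat // eqxx.
  - rewrite andbT /W catA drop_size_cat; last by rewrite size_cat.
    by rewrite take_size eqxx.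
rewrite /occ -size_filter.
exact: (uniq_leq_size ul sub).
Qed.

Lemma decomp (T : Type) (t n : nat) (s : seq T) : size s = n -> 2 * t <= n ->
  s = take t s ++ take (n - 2 * t) (drop t s) ++ drop (n - t) s.
Proof.
move=> sn le.
rewrite (_ : drop (n - t) s = drop (n - 2 * t) (drop t s)).
  by rewrite !cat_take_drop.
rewrite drop_drop; congr drop; lia.
Qed.

Theorem lemma7 (n t k : nat) :
  1 <= t -> 2 * t <= n -> 2 <= k ->
  Ck k n t <= k ^ t * Ak k (n - 2 * t) (nseq t 0).
Proof.
move=> t1 le2 k2.
case: k k2 => [//|k'] _.
have tn : t <= n by apply: leq_trans le2; rewrite mul2n -addnn leq_addr.
pose mid (w : n.-tuple 'I_k'.+1) := take (n - 2 * t) (drop t (val w)).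
pose d1 : t.-tuple 'I_k'.+1 := [tuple of nseq t ord0].
pose d2 : (n - 2 * t).-tuple 'I_k'.+1 := [tuple of nseq (n - 2 * t) ord0].
pose f (w : n.-tuple 'I_k'.+1) :=
  (insubd d1 (take t (val w)), insubd d2 (F (take t (val w)) 0 (mid w))).
have stw (w : n.-tuple 'I_k'.+1) : size (take t (val w)) = t.
  by rewrite size_takel // size_tuple.
have smid (w : n.-tuple 'I_k'.+1) : size (mid w) = n - 2 * t.
  rewrite size_takel // size_drop size_tuple; apply: leq_sub2l.
  by rewrite mul2n -addnn leq_addr.
have vf1 (w : n.-tuple 'I_k'.+1) : val (insubd d1 (take t (val w))) = take t (val w).
  by rewrite val_insubd ifT //; apply/eqP; exact: stw.
have vf2 (w : n.-tuple 'I_k'.+1) : val (insubd d2 (F (take t (val w)) 0 (mid w))) =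
             F (take t (val w)) 0 (mid w).
  by rewrite val_insubd ifT //; apply/eqP; rewrite size_F; exact: smid.
rewrite /Ck /Ak.
set S := [set w : n.-tuple 'I_k'.+1 | _].
have cl (w : n.-tuple 'I_k'.+1) : w \in S -> drop (n - t) (val w) = take t (val w) /\
    occ (map val (take t (val w))) (map val (val w)) == 2.
  rewrite inE => /existsP [u /andP [/and4P [_ _ Hp Hs] Ho]].
  move: Hp Hs; rewrite !size_map !size_tuple => /eqP Hp /eqP Hs.
  have Ht : map val (take t (val w)) = map val (val u).
    by rewrite map_take; exact: Hp.
  have Hd : map val (drop (n - t) (val w)) = map val (val u).
    by rewrite map_drop; exact: Hs.
  rewrite Ht; split; last exact: Ho.
  by apply: (inj_map val_inj); rewrite Ht Hd.
have dec (w : n.-tuple 'I_k'.+1) : w \in S -> val w = take t (val w) ++ mid w ++ take t (val w).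
  move=> /cl [E _]; rewrite -{2}E; apply: decomp => //; exact: size_tuple.
have finj : {in S &, injective f}.
  move=> w1 w2 S1 S2 [E1 E2].
  have E1' : take t (val w1) = take t (val w2) by rewrite -vf1 E1 vf1.
  have E2' : mid w1 = mid w2.
    apply: (@F_inj k' (take t (val w1)) 0).
    by rewrite -vf2 E2 vf2 E1'.
  by apply: val_inj; rewrite (dec _ S1) (dec _ S2) E1' E2'.
have -> : k'.+1 ^ t = #|[set: t.-tuple 'I_k'.+1]|.
  by rewrite cardsT card_tuple card_ord.
rewrite -cardsX -(card_in_imset finj).
apply: subset_leq_card; apply/subsetP => _ /imsetP [w wS ->].
rewrite in_setX in_setT /= inE vf2.
rewrite -[_ == 0]negbK -lt0n occ_infix; apply/negP => H.
have K := key (stw w) (mid w) 0 (leq0n t) H.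
rewrite take0 cat0s in K.
case/infixP: K => [p [s Em]].
have [_ /eqP Ho] := cl w wS.
have pos : 0 < size (map val (take t (val w))) by rewrite size_map stw.
have := occ3 (map val (take t (val w))) p s pos.
by rewrite -Em -!map_cat -dec // Ho.
Qed.
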